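(* Let $p\ge2$, $n\ge1$, $\alpha>1$ real, and $m\in\{j/p^n:0\le j\le p^n\}$ be fixed, and let $\mathcal{B}_m$ be the set of Boolean functions $f:(\mathbb{Z}/p\mathbb{Z})^n\to\{0,1\}$ with $\mathbb{E} f=m$. There exists $\epsilon_0>0$ such that for every $\epsilon\in(0,\epsilon_0)$, every $f\in\mathcal{B}_m$ maximizing $\mathbb{E}(T_\epsilon f)^\alpha$ over $\mathcal{B}_m$ satisfies $I(f)=\min\{I(g):g\in\mathcal{B}_m\}$.
   Context: $(\mathbb{Z}/p\mathbb{Z})^n$ carries the uniform measure; $X$ is a uniform random element. Here the noise operator is $T_\epsilon f(x)=\mathbb{E} f(x+Z)$, where $Z$ has independent coordinates, each equal to $0$ with probability $1-\epsilon$ and to $1$ and to $-1$ (i.e. $p-1$) with probability $\epsilon/2$ each. For $j\in[n]$, let $\tilde Z_j$ take the values $1$ and $-1$ with probability $1/2$ each, independent of $X$; $\tilde\sigma_j(x)=(x_1,\dots,x_j+\tilde Z_j,\dots,x_n)$, $I_j(f)=\mathbb{P}(f(X)\ne f(\tilde\sigma_j(X)))$, and the total influence is $I(f)=\sum_{j=1}^nI_j(f)$. *)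

(* Defs.v *)
From HB Require Import structures.
From mathcomp Require Import all_boot all_order all_algebra.
From mathcomp Require Import all_classical all_reals.
From mathcomp Require Import exp.
Set Implicit Arguments. Unset Strict Implicit. Unset Printing Implicit Defensive.
Import Order.TTheory GRing.Theory Num.Theory.
Local Open Scope ring_scope.

(* Points of (Z/pZ)^n (use only with 1 < p). *)
Definition pt (p n : nat) := {ffun 'I_n -> 'Z_p}.

Definition ptadd (p n : nat) (x y : pt p n) : pt p n := [ffun i => x i + y i].

Definition shift (p n : nat) (x : pt p n) (j : 'I_n) (s : 'Z_p) : pt p n :=
  [ffun i => if i == j then x i + s else x i].

Definition bval (R : realType) (p n : nat) (f : {ffun pt p n -> bool}) (x : pt p n) : R :=
  (f x)%:R.

Definition expect (R : realType) (p n : nat) (h : pt p n -> R) : R :=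
  (\sum_(x : pt p n) h x) / (#|{: pt p n}|)%:R.

(* Noise coordinates: label 0 -> value 0 (prob 1-eps), label 1 -> value 1
   (prob eps/2), label 2 -> value -1 (prob eps/2).  For p = 2 the values 1 and
   -1 coincide, as in the paper. *)
Definition nval (p : nat) (k : 'I_3) : 'Z_p :=
  if val k == 0%N then 0 else if val k == 1%N then 1 else -1.
Definition nweight (R : realType) (eps : R) (k : 'I_3) : R :=
  if val k == 0%N then 1 - eps else eps / 2.

Definition noiseop (R : realType) (p n : nat) (eps : R) (h : pt p n -> R)
    (x : pt p n) : R :=
  \sum_(c : {ffun 'I_n -> 'I_3})
     (\prod_(i < n) nweight eps (c i)) * h (ptadd x [ffun i => nval p (c i)]).

Definition influence_j (R : realType) (p n : nat) (f : {ffun pt p n -> bool})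
    (j : 'I_n) : R :=
  expect (fun x : pt p n =>
     ((f x != f (shift x j 1))%:R + (f x != f (shift x j (-1)))%:R) / 2 : R).

Definition total_influence (R : realType) (p n : nat) (f : {ffun pt p n -> bool}) : R :=
  \sum_(j < n) influence_j R f j.

Definition inB (R : realType) (p n : nat) (m : R) (f : {ffun pt p n -> bool}) : Prop :=
  expect (bval R f) = m.

Definition noise_moment (R : realType) (p n : nat) (eps alpha : R)
    (f : {ffun pt p n -> bool}) : R :=
  expect (fun x => powR (noiseop eps (bval R f) x) alpha).

(* Main.v *)
Require Import Defs.
From HB Require Import structures.
From mathcomp Require Import all_boot all_order all_algebra.
From mathcomp Require Import all_classical all_reals.
From mathcomp Require Import sequences exp.
From mathcomp Require Import ring lra.
Set Implicit Arguments. Unset Strict Implicit. Unset Printing Implicit Defensive.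
Import Order.TTheory GRing.Theory Num.Theory.
Local Open Scope ring_scope.

Section Pow.
Variable R : realType.
Lemma pow_lb (a t : R) : 1 < a -> 0 <= t -> 1 - a * (1 - t) <= t `^ a.
Proof.
move=> a1 t0.
have a0 : 0 < a by lra.
have q0 : 0 < a / (a - 1) by apply: divr_gt0; lra.
have := @conjugate_powR R t 1 a (a / (a - 1)) t0 ler01 a0 q0.
rewrite invf_div.
have -> : a^-1 + (a - 1) / a = 1 by field; lra.
move=> /(_ erefl). rewrite powR1 mulr1. move=> H.
have E : t `^ a / a + 1 * ((a - 1) / a) = (t `^ a + a - 1) / a by field; lra.
rewrite E ler_pdivlMr // in H.
lra.
Qed.

Lemma pow_ub (a t : R) : 1 < a -> 0 <= t -> t <= 1 ->
  t `^ a <= 1 - a * (1 - t) + a ^+ 2 * (1 - t) ^+ 2.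
Proof.
move=> a1 t0 t1.
have [->|tn0] := eqVneq t 0.
  rewrite powR0; last by apply/eqP; lra.
  nra.
have tp : 0 < t by rewrite lt0r tn0.
set s := a * (1 - t).
have s0 : 0 <= s by rewrite /s; apply: mulr_ge0; lra.
have -> : a ^+ 2 * (1 - t) ^+ 2 = s ^+ 2 by rewrite /s exprMn.
rewrite /powR (negbTE tn0).
have hl : ln t <= t - 1.
  have := @le_ln1Dx R (t - 1); have -> : 1 + (t - 1) = t by ring. apply; lra.
apply: (@le_trans _ _ (expR (- s))).
  rewrite ler_expR /s; nra.
rewrite expRN.
have e1 := expR_ge1Dx s.
have hp : 0 < 1 + s by lra.
apply: (@le_trans _ _ ((1 + s)^-1)).
  by rewrite lef_pV2 ?posrE //; apply: lt_le_trans (expR_gt0 _) _ => //.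
rewrite -div1r ler_pdivrMr //; nra.
Qed.
End Pow.

Section S.
Variables (R : realType) (p n : nat).
Local Notation P := (pt p n).
Local Notation C := {ffun 'I_n -> 'I_3}.
Definition wt (eps : R) (c : C) : R := \prod_(i < n) nweight eps (c i).
Definition zc (c : C) : P := [ffun i => nval p (c i)].
Definition k1 : 'I_3 := @Ordinal 3 1 isT.
Definition k2 : 'I_3 := @Ordinal 3 2 isT.
Definition c0 : C := [ffun _ => ord0].
Definition delta (j : 'I_n) (k : 'I_3) : C := [ffun i => if i == j then k else ord0].

Lemma noiseopE eps (h : P -> R) x : noiseop eps h x = \sum_c wt eps c * h (ptadd x (zc c)).
Proof. by []. Qed.

Lemma sum_wt (eps : R) : \sum_c wt eps c = 1.
Proof.
rewrite /wt -(bigA_distr_bigA (fun (i : 'I_n) (k : 'I_3) => nweight eps k)) /= big1 // => i _.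
rewrite !big_ord_recl big_ord0 /nweight /=. by field.
Qed.

Lemma nweight_b (eps : R) k : 0 <= eps <= 1 -> 0 <= nweight eps k <= 1.
Proof. by move=> he; rewrite /nweight; case: ifP => _; apply/andP; split; lra. Qed.

Lemma wt_ge0 (eps : R) (c : C) : 0 <= eps <= 1 -> 0 <= wt eps c.
Proof. by move=> he; apply: prodr_ge0 => i _; case/andP: (nweight_b (c i) he). Qed.

Lemma wt_le1 (eps : R) (c : C) : 0 <= eps <= 1 -> wt eps c <= 1.
Proof. by move=> he; apply: prodr_ile1 => i _; apply: nweight_b. Qed.

Lemma wt_nz (eps : R) (c : C) i0 : 0 <= eps <= 1 -> val (c i0) != 0%N -> wt eps c <= eps / 2.
Proof.
move=> he hc; rewrite /wt (bigD1 i0) //= {1}/nweight (negbTE hc).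
have h1 : \prod_(i < n | i != i0) nweight eps (c i) <= 1.
  by apply: prodr_ile1 => i _; apply: nweight_b.
have h0 : 0 <= \prod_(i < n | i != i0) nweight eps (c i).
  by apply: prodr_ge0 => i _; case/andP: (nweight_b (c i) he).
nra.
Qed.

Lemma wt_nz2 (eps : R) (c : C) i0 i1 : 0 <= eps <= 1 -> i1 != i0 ->
  val (c i0) != 0%N -> val (c i1) != 0%N -> wt eps c <= eps ^+ 2.
Proof.
move=> he hi hc0 hc1; rewrite /wt (bigD1 i0) //= (bigD1 i1) //=.
rewrite {1}/nweight (negbTE hc0) {1}/nweight (negbTE hc1).
set Q := \prod_(i < n | _) _.
have h1 : Q <= 1 by apply: prodr_ile1 => i _; apply: nweight_b.
have h0 : 0 <= Q by apply: prodr_ge0 => i _; case/andP: (nweight_b (c i) he).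
nra.
Qed.

Lemma wt_delta (eps : R) j k : val k != 0%N -> wt eps (delta j k) = eps / 2 * (1 - eps) ^+ n.-1.
Proof.
move=> hk; rewrite /wt (bigD1 j) //= ffunE eqxx {1}/nweight (negbTE hk).
congr (_ * _).
rewrite (eq_bigr (fun _ => 1 - eps)); last first.
  by move=> i /negbTE hi; rewrite ffunE hi /nweight.
by rewrite prodr_const cardC1 card_ord.
Qed.

Lemma ptadd0 x : ptadd x (zc c0) = x.
Proof. by apply/ffunP => i; rewrite !ffunE /nval /= addr0. Qed.

Lemma ptadd_delta x j k : ptadd x (zc (delta j k)) = shift x j (nval p k).
Proof.
apply/ffunP => i; rewrite !ffunE; case: (i == j) => //.
by rewrite /nval /= addr0.
Qed.

Lemma I3_nz (k : 'I_3) : val k != 0%N -> k = k1 \/ k = k2.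
Proof.
case: k => [[|[|[|m]]] Hm] //= _; [left|right]; by apply/val_inj.
Qed.

Lemma c_nz (c : C) : c != c0 -> exists i0, val (c i0) != 0%N.
Proof.
move=> hc; case: (pickP (fun i => val (c i) != 0%N)) => [i0 H|H]; first by exists i0.
case/negP: hc; apply/eqP/ffunP => i; rewrite ffunE; apply/val_inj => /=.
by move: (H i) => /= /negbFE /eqP.
Qed.

Lemma sum_bound (eps : R) (u : C -> R) : 0 <= eps <= 1 -> u c0 = 0 ->
  (forall c, 0 <= u c <= 1) -> \sum_c wt eps c * u c <= #|{: C}|%:R * eps.
Proof.
move=> he hu0 hu.
apply: (@le_trans _ _ (\sum_(c : C) eps)).
  apply: ler_sum => c _.
  have [->|hc] := eqVneq c c0; first by rewrite hu0 mulr0; lra.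
  case: (c_nz hc) => i0 hi0.
  have := wt_nz he hi0; have := wt_ge0 c he; case/andP: (hu c); nra.
by rewrite sumr_const mulr_natl.
Qed.

Definition sc (c : C) : R := \sum_j ((c == delta j k1)%:R + (c == delta j k2)%:R).

Lemma sum_pick (F : C -> R) d : \sum_c (c == d)%:R * F c = F d.
Proof.
rewrite (bigD1 d) //= eqxx mul1r big1 ?addr0 // => c /negbTE ->; by rewrite mul0r.
Qed.

Lemma sc_case (c : C) : (sc c = 1) \/ (sc c = 0 /\ (c = c0 \/ exists i0 i1,
   i1 != i0 /\ val (c i0) != 0%N /\ val (c i1) != 0%N)).
Proof.
case: (pickP (fun j => (c == delta j k1) || (c == delta j k2))) => [j0 Hj0 | Hno].
  left; rewrite /sc (bigD1 j0) //= big1.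
    have hd : (delta j0 k1 == delta j0 k2) = false.
      apply/negbTE/eqP => /ffunP /(_ j0); rewrite !ffunE eqxx => /(congr1 val) //.
    case/orP: Hj0 => /eqP ->; rewrite eqxx /= ?hd ?(eq_sym (delta j0 k2)) ?hd /=; ring.
  move=> j hj.
  have cj0 : val (c j0) != 0%N by case/orP: Hj0 => /eqP ->; rewrite ffunE eqxx.
  have F k : (c == delta j k) = false.
    apply/negbTE/eqP => E; move: cj0; rewrite E ffunE.
    by rewrite eq_sym in hj; rewrite (negbTE hj).
  by rewrite !F /= addr0.
right; split.
  rewrite /sc big1 // => j _; move: (Hno j) => /= /norP [/negbTE -> /negbTE ->].
  by rewrite /= addr0.
have [->|hc] := eqVneq c c0; [by left|right].
case: (c_nz hc) => i0 hi0.
have hne : c != delta i0 (c i0).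
  by case: (I3_nz hi0) => e; move: (Hno i0) => /= /norP [h1 h2]; rewrite e.
case: (pickP (fun i => c i != delta i0 (c i0) i)) => [i1 Hi1 | Hn].
  exists i0, i1.
  have hi : i1 != i0 by apply/eqP => E; move: Hi1; rewrite E ffunE !eqxx.
  split; first exact hi. split; first exact hi0.
  move: Hi1; rewrite ffunE (negbTE hi) => H; apply: contra H => /eqP h.
  by apply/eqP/val_inj.
case/negP: hne; apply/eqP/ffunP => i; by move: (Hn i) => /= /negbFE /eqP.
Qed.

Lemma decomp (eps : R) (u : C -> R) : 0 <= eps <= 1 -> u c0 = 0 ->
  (forall c, 0 <= u c <= 1) ->
  eps / 2 * (1 - eps) ^+ n.-1 * \sum_j (u (delta j k1) + u (delta j k2))
     <= \sum_c wt eps c * u c /\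
  \sum_c wt eps c * u c <= eps / 2 * (1 - eps) ^+ n.-1 *
     \sum_j (u (delta j k1) + u (delta j k2)) + #|{: C}|%:R * eps ^+ 2.
Proof.
move=> he hu0 hu.
have E : \sum_c wt eps c * u c = \sum_c sc c * (wt eps c * u c)
     + \sum_c (1 - sc c) * (wt eps c * u c).
  by rewrite -big_split /=; apply: eq_bigr => c _; ring.
have E1 : \sum_c sc c * (wt eps c * u c) = eps / 2 * (1 - eps) ^+ n.-1 *
     \sum_j (u (delta j k1) + u (delta j k2)).
  rewrite /sc; under eq_bigr do rewrite mulr_suml.
  rewrite exchange_big /= mulr_sumr; apply: eq_bigr => j _.
  under eq_bigr do rewrite mulrDl.
  by rewrite big_split /= !sum_pick !wt_delta //; ring.
have B c : 0 <= (1 - sc c) * (wt eps c * u c) <= eps ^+ 2.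
  case: (sc_case c) => [->|[-> H]].
    by rewrite subrr mul0r lexx exprn_ge0 //; case/andP: he.
  rewrite subr0 mul1r; case: H => [->|[i0 [i1 [h1 [h2 h3]]]]].
    by rewrite hu0 mulr0 lexx exprn_ge0 //; case/andP: he.
  have := wt_nz2 he h1 h2 h3; have := wt_ge0 c he; case/andP: (hu c); nra.
rewrite E E1; split.
  by rewrite lerDl; apply: sumr_ge0 => c _; case/andP: (B c).
rewrite lerD2l; apply: (@le_trans _ _ (\sum_(c : C) eps ^+ 2)).
  by apply: ler_sum => c _; case/andP: (B c).
by rewrite sumr_const mulr_natl.
Qed.

Lemma shiftK x j s : shift (shift x j s) j (- s) = x :> P.
Proof. by apply/ffunP => i; rewrite !ffunE; case: (i == j) => //; rewrite addrK. Qed.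

Lemma shiftKN x j s : shift (shift x j (- s)) j s = x :> P.
Proof. by rewrite -{2}(opprK s) shiftK. Qed.

Lemma sum_shift (F : P -> R) j s : \sum_x F (shift x j s) = \sum_x F x.
Proof.
rewrite [RHS](reindex_inj (h := fun x => shift x j s)) //.
exact: (can_inj (g := fun x => shift x j (- s)) (fun x => shiftK x j s)).
Qed.

Definition Br (f : {ffun P -> bool}) x : R :=
  \sum_(j < n) ((~~ f (shift x j 1))%:R + (~~ f (shift x j (-1)))%:R).
Definition Sn (f : {ffun P -> bool}) : nat :=
  (\sum_x (f x * \sum_(j < n) (~~ f (shift x j 1%R) + ~~ f (shift x j (-1)%R))))%N.

Lemma SnE (f : {ffun P -> bool}) : (Sn f)%:R = \sum_x (f x)%:R * Br f x.
Proof.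
rewrite /Sn natr_sum; apply: eq_bigr => x _; rewrite natrM /Br natr_sum.
by congr (_ * _); apply: eq_bigr => j _; rewrite natrD.
Qed.

Lemma neqE (a b : bool) : ((a != b)%:R : R) = a%:R * (~~ b)%:R + b%:R * (~~ a)%:R.
Proof. by case: a; case: b => /=; ring. Qed.

Lemma infl_eq (f : {ffun P -> bool}) : total_influence R f = (Sn f)%:R / #|{: P}|%:R.
Proof.
rewrite /total_influence /influence_j /expect -mulr_suml SnE; congr (_ / _).
under [RHS]eq_bigr do rewrite /Br mulr_sumr.
rewrite [RHS]exchange_big /=; apply: eq_bigr => j _.
rewrite (eq_bigr (fun x => ((f x)%:R * (~~ f (shift x j 1))%:R
   + (f (shift x j 1))%:R * (~~ f x)%:R + ((f x)%:R * (~~ f (shift x j (-1)))%:R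
   + (f (shift x j (-1)))%:R * (~~ f x)%:R)) / 2)); last first.
  by move=> x _; rewrite !neqE.
have h1 : \sum_x (f (shift x j 1))%:R * (~~ f x)%:R
        = \sum_x (f x)%:R * (~~ f (shift x j (-1)))%:R :> R.
  rewrite -(sum_shift (fun y => (f y)%:R * (~~ f (shift y j (-1)))%:R) j 1).
  by apply: eq_bigr => x _; rewrite shiftK.
have h2 : \sum_x (f (shift x j (-1)))%:R * (~~ f x)%:R
        = \sum_x (f x)%:R * (~~ f (shift x j 1))%:R :> R.
  rewrite -(sum_shift (fun y => (f y)%:R * (~~ f (shift y j 1))%:R) j (-1)).
  by apply: eq_bigr => x _; rewrite shiftKN.
rewrite -mulr_suml !big_split /= h1 h2.
under [RHS]eq_bigr do rewrite mulrDr.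
rewrite big_split /=; by field.
Qed.

Lemma T_split (f : {ffun P -> bool}) x (eps : R) : noiseop eps (bval R f) x =
   1 - \sum_c wt eps c * (1 - bval R f (ptadd x (zc c))).
Proof.
rewrite noiseopE; under [X in _ = 1 - X]eq_bigr do rewrite mulrBr mulr1.
by rewrite sumrB sum_wt; ring.
Qed.

Lemma bval_b (f : {ffun P -> bool}) y : 0 <= bval R f y <= 1.
Proof. by rewrite /bval; case: (f y) => /=; rewrite ?ler01 ?lexx. Qed.

Lemma u_sum (f : {ffun P -> bool}) x : \sum_j ((1 - bval R f (ptadd x (zc (delta j k1))))
   + (1 - bval R f (ptadd x (zc (delta j k2))))) = Br f x.
Proof.
apply: eq_bigr => j _; rewrite !ptadd_delta /bval /nval /=.
by case: (f _); case: (f _) => /=; ring.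
Qed.

Lemma sum_le1 (eps : R) (u : C -> R) : 0 <= eps <= 1 -> (forall c, 0 <= u c <= 1) ->
  0 <= \sum_c wt eps c * u c <= 1.
Proof.
move=> he hu; apply/andP; split.
  apply: sumr_ge0 => c _; apply: mulr_ge0; first exact: wt_ge0.
  by case/andP: (hu c).
rewrite -(sum_wt eps); apply: ler_sum => c _.
have := wt_ge0 c he; case/andP: (hu c); nra.
Qed.

Local Notation K := (#|{: C}|%:R : R).

Lemma lower_pt (f : {ffun P -> bool}) x (eps a : R) : 0 <= eps <= 1 -> 1 < a ->
  (f x)%:R * (1 - a * (eps / 2 * (1 - eps) ^+ n.-1) * Br f x) - a * K * eps ^+ 2
    <= noiseop eps (bval R f) x `^ a.
Proof.
move=> he a1.
have K0 : 0 <= K by [].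
case hx: (f x); last first.
  rewrite mul0r sub0r; apply: le_trans (powR_ge0 _ _).
  by rewrite oppr_le0; apply: mulr_ge0; [apply: mulr_ge0 => //; lra | apply: exprn_ge0; case/andP: he].
rewrite T_split.
set U := \sum_c _.
have hu c : 0 <= 1 - bval R f (ptadd x (zc c)) <= 1.
  by case/andP: (bval_b f (ptadd x (zc c))) => ? ?; apply/andP; split; lra.
have hu0 : 1 - bval R f (ptadd x (zc c0)) = 0 by rewrite ptadd0 /bval hx subrr.
have [_ hd2] := decomp he hu0 hu.
rewrite u_sum in hd2.
have /andP [U0 U1] := sum_le1 he hu.
rewrite -/U in hd2 U0 U1.
have := pow_lb a1 (_ : 0 <= 1 - U); move=> /(_ ltac:(lra)) hl.
have ha : a * U <= a * (eps / 2 * (1 - eps) ^+ n.-1 * Br f x + K * eps ^+ 2).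
  by apply: ler_wpM2l => //; lra.
apply: le_trans hl; rewrite /= mul1r; lra.
Qed.

Lemma upper_pt (f : {ffun P -> bool}) x (eps a : R) : 0 <= eps <= 1 -> 1 < a ->
  noiseop eps (bval R f) x `^ a <=
  (f x)%:R * (1 - a * (eps / 2 * (1 - eps) ^+ n.-1) * Br f x)
    + a ^+ 2 * (K * eps) ^+ 2 + (K * eps) `^ a.
Proof.
move=> he a1.
have K0 : 0 <= K by [].
have Ke0 : 0 <= K * eps by apply: mulr_ge0 => //; case/andP: he.
have P0 : 0 <= (K * eps) `^ a by apply: powR_ge0.
have Q0 : 0 <= a ^+ 2 * (K * eps) ^+ 2 by apply: mulr_ge0; apply: exprn_ge0; lra.
case hx: (f x); last first.
  rewrite mul0r add0r.
  have hu c : 0 <= bval R f (ptadd x (zc c)) <= 1 by apply: bval_b.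
  have hu0 : bval R f (ptadd x (zc c0)) = 0 by rewrite ptadd0 /bval hx.
  have hb := sum_bound he hu0 hu.
  have /andP [V0 V1] := sum_le1 he hu.
  rewrite noiseopE.
  have : (\sum_c wt eps c * bval R f (ptadd x (zc c))) `^ a <= (K * eps) `^ a.
    have := @ge0_ler_powR R a _ (\sum_c wt eps c * bval R f (ptadd x (zc c))) (K * eps).
    by rewrite !nnegrE; move=> /(_ ltac:(lra) V0 Ke0 hb).
  lra.
rewrite T_split.
set U := \sum_c _.
have hu c : 0 <= 1 - bval R f (ptadd x (zc c)) <= 1.
  by case/andP: (bval_b f (ptadd x (zc c))) => ? ?; apply/andP; split; lra.
have hu0 : 1 - bval R f (ptadd x (zc c0)) = 0 by rewrite ptadd0 /bval hx subrr.
have [hd1 _] := decomp he hu0 hu.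
rewrite u_sum in hd1.
have hb := sum_bound he hu0 hu.
have /andP [U0 U1] := sum_le1 he hu.
rewrite -/U in hd1 hb U0 U1.
have hl : (1 - U) `^ a <= 1 - a * U + a ^+ 2 * U ^+ 2.
  have E : 1 - (1 - U) = U by ring.
  by have := @pow_ub R a (1 - U) a1 ltac:(lra) ltac:(lra); rewrite E.
have ha : a * (eps / 2 * (1 - eps) ^+ n.-1 * Br f x) <= a * U.
  by apply: ler_wpM2l => //; lra.
have hU2 : U ^+ 2 <= (K * eps) ^+ 2 by rewrite !expr2; nra.
have ha2 : a ^+ 2 * U ^+ 2 <= a ^+ 2 * (K * eps) ^+ 2.
  by apply: ler_wpM2l => //; apply: exprn_ge0; lra.
apply: le_trans hl _; rewrite mul1r; lra.
Qed.

Lemma sum_form (F G : P -> R) (c d : R) :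
  \sum_x (F x * (1 - c * G x) + d) = \sum_x F x - c * \sum_x (F x * G x) + #|{: P}|%:R * d.
Proof.
rewrite big_split sumr_const /= mulr_natl; congr (_ + _).
under eq_bigr do rewrite mulrBr mulr1.
rewrite sumrB mulr_sumr; congr (_ - _); apply: eq_bigr => x _; ring.
Qed.

End S.

Lemma pow_half_le (R : realType) (e : R) k : 0 <= e <= 1/2 -> (1/2 : R) ^+ k <= (1 - e) ^+ k.
Proof.
move=> he; elim: k => [|k IH]; first by rewrite !expr0.
rewrite !exprS; apply: ler_pM => //; try lra.
by apply: exprn_ge0; lra.
Qed.

Theorem theorem6 (R : realType) (p n : nat) (alpha : R) (j : nat) :
  (1 < p)%N -> (0 < n)%N -> 1 < alpha -> (j <= p ^ n)%N ->
  let m : R := j%:R / (p ^ n)%:R in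
  exists eps0 : R, 0 < eps0 /\
    forall eps : R, 0 < eps -> eps < eps0 ->
    forall f : {ffun pt p n -> bool},
      inB m f ->
      (forall g : {ffun pt p n -> bool}, inB m g ->
          noise_moment eps alpha g <= noise_moment eps alpha f) ->
      forall g : {ffun pt p n -> bool}, inB m g ->
        total_influence R f <= total_influence R g.
Proof.
move=> p1 n0 a1 jle m.
have N0 : 0 < (#|{: pt p n}|%:R : R).
  by rewrite ltr0n; apply/card_gt0P; exists [ffun _ => 0].
have K1 : 1 <= (#|{: {ffun 'I_n -> 'I_3}}|%:R : R).
  by rewrite ler1n; apply/card_gt0P; exists (c0 n).
move: N0 K1.
set N := (#|{: pt p n}|%:R : R).
set K := (#|{: {ffun 'I_n -> 'I_3}}|%:R : R).
move=> N0 K1.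
set h := (1/2 : R) ^+ n.-1.
have h0 : 0 < h by apply: exprn_gt0; lra.
set c := alpha * h / 2 / N.
have c0p : 0 < c by rewrite /c; apply: divr_gt0 => //; apply: divr_gt0; [apply: mulr_gt0|]; lra.
set D := alpha * K + alpha ^+ 2 * K ^+ 2.
have D0 : 0 < D.
  have : 0 < alpha * K by apply: mulr_gt0; lra.
  have : 0 <= alpha ^+ 2 * K ^+ 2 by apply: mulr_ge0; apply: exprn_ge0; lra.
  rewrite /D; lra.
set th := c / (2 * K).
have th0 : 0 < th by apply: divr_gt0 => //; lra.
set e1 := th `^ ((alpha - 1)^-1) / K.
have e10 : 0 < e1 by apply: divr_gt0; [apply: powR_gt0|]; lra.
have cD : 0 < c / (2 * D) by apply: divr_gt0; lra.
exists (Num.min (1/2) (Num.min (c / (2 * D)) e1)).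
split; first by rewrite !lt_min; apply/and3P; split => //; lra.
move=> eps e_pos; rewrite !lt_min => /and3P [eh ed ee].
move=> f hf hmax g hg.
rewrite !infl_eq -/N ler_pM2r ?invr_gt0 // ler_nat leqNgt; apply/negP => hlt.
have he : 0 <= eps <= 1 by apply/andP; split; lra.
set w1 := eps / 2 * (1 - eps) ^+ n.-1.
have Lg : m - alpha * w1 * ((Sn g)%:R / N) - alpha * K * eps ^+ 2 <= noise_moment eps alpha g.
  rewrite /noise_moment /expect -/N.
  apply: (@le_trans _ _ ((\sum_x ((g x)%:R * (1 - alpha * w1 * Br R g x)
                        + - (alpha * K * eps ^+ 2))) / N)).
    rewrite sum_form -/N SnE -hg /expect /bval -/N.
    rewrite le_eqVlt; apply/orP; left; apply/eqP; field; lra.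
  apply: ler_wpM2r; first by rewrite invr_ge0; lra.
  apply: ler_sum => x _; exact: lower_pt.
have Uf : noise_moment eps alpha f <= m - alpha * w1 * ((Sn f)%:R / N)
     + (alpha ^+ 2 * (K * eps) ^+ 2 + (K * eps) `^ alpha).
  rewrite /noise_moment /expect -/N.
  apply: (@le_trans _ _ ((\sum_x ((f x)%:R * (1 - alpha * w1 * Br R f x)
                        + (alpha ^+ 2 * (K * eps) ^+ 2 + (K * eps) `^ alpha))) / N)).
    apply: ler_wpM2r; first by rewrite invr_ge0; lra.
  apply: ler_sum => x _; rewrite addrA; exact: upper_pt.
  rewrite sum_form -/N SnE -hf /expect /bval -/N.
    rewrite le_eqVlt; apply/orP; left; apply/eqP; field; lra.
have hm := hmax g hg.
have hS : 1 <= (Sn f)%:R - (Sn g)%:R :> R.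
  have : ((Sn g).+1%:R <= (Sn f)%:R :> R) by rewrite ler_nat.
  rewrite -natr1; lra.
have hw : eps / 2 * h <= w1.
  rewrite /w1 /h; apply: ler_wpM2l; first lra.
  by apply: pow_half_le; lra.
have key1 : c * eps <= alpha * w1 * (((Sn f)%:R - (Sn g)%:R) / N).
  rewrite /c.
  have E : alpha * h / 2 / N * eps = alpha * (eps / 2 * h) * (1 / N) by field; lra.
  rewrite E; apply: ler_pM; try lra.
  - by apply: mulr_ge0; [lra| apply: mulr_ge0; lra].
  - by apply: divr_ge0; lra.
  - by apply: ler_wpM2l; lra.
  - by apply: ler_wpM2r; [rewrite invr_ge0; lra | ].
have key2 : alpha * w1 * (((Sn f)%:R - (Sn g)%:R) / N)
   <= alpha * K * eps ^+ 2 + (alpha ^+ 2 * (K * eps) ^+ 2 + (K * eps) `^ alpha).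
  have E : alpha * w1 * (((Sn f)%:R - (Sn g)%:R) / N) =
     alpha * w1 * ((Sn f)%:R / N) - alpha * w1 * ((Sn g)%:R / N) by field; lra.
  rewrite E; lra.
have b1 : D * eps < c / 2.
  have : D * eps < D * (c / (2 * D)) by rewrite ltr_pM2l.
  have E : D * (c / (2 * D)) = c / 2 by field; lra.
  lra.
have b1' : alpha * K * eps ^+ 2 + alpha ^+ 2 * (K * eps) ^+ 2 < c / 2 * eps.
  have E : alpha * K * eps ^+ 2 + alpha ^+ 2 * (K * eps) ^+ 2 = (D * eps) * eps by rewrite /D; ring.
  by rewrite E ltr_pM2r.
have Ke0 : 0 <= K * eps by apply: mulr_ge0; lra.
have b2 : (K * eps) `^ (alpha - 1) <= th.
  have hKe : K * eps <= th `^ ((alpha - 1)^-1).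
    have : eps <= e1 by lra.
    by rewrite /e1 ler_pdivlMr; [rewrite mulrC|lra].
  have := @ge0_ler_powR R (alpha - 1) _ (K * eps) (th `^ ((alpha - 1)^-1)).
  rewrite !nnegrE -powRrM mulVf ?powRr1; last by apply/eqP; lra.
  - by move=> /(_ ltac:(lra) Ke0 (powR_ge0 _ _) hKe).
  - lra.
have b2' : (K * eps) `^ alpha <= c / 2 * eps.
  rewrite -mulr_powRB1 //; last lra.
  have : K * eps * (K * eps) `^ (alpha - 1) <= K * eps * th by apply: ler_wpM2l.
  have E : K * eps * th = c / 2 * eps by rewrite /th; field; lra.
  lra.
lra.
Qed.
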